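(* For $s,L$ large enough, the deterministic subset $\Xi=[-s,s]\cap\mathbb{Z}_L$ is typically $s$-sparse and is $s/16$-cosine generic.
   Context: $\mathbb{Z}_L=\{\lfloor-(L-1)/2\rfloor,\dots,\lfloor(L-1)/2\rfloor\}$. A (possibly deterministic) random subset $\Xi\subset\mathbb{Z}_L$ is typically $s$-sparse if for some fixed constants $\alpha,\beta>0$ we have $\alpha s\le|\Xi|\le\beta s$ with probability $1-o_L(1)$. With $\mathcal{V}(\Xi,a)=\mathbf{1}_{\{0\in\Xi\}}+2\sum_{k\in\Xi\setminus\{0\}}\cos^2(2\pi ak/L)$, $\Xi$ is $\Gamma$-cosine generic if with probability $1-o_L(1)$, $\min_{a\in\mathbb{Z}_L}\mathcal{V}(\Xi,a)\ge\Gamma(1-o_L(1))$. *)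

(* Defs.v *)
From Stdlib Require Import Reals ZArith List.
Import ListNotations.
Open Scope R_scope.

(* Z_L = { floor(-(L-1)/2), ..., floor((L-1)/2) } as a duplicate-free list of
   integers (Z.div is floor division). Has exactly L elements for L >= 1. *)
Definition ZL (L : nat) : list Z :=
  let lo := Z.div (- (Z.of_nat L - 1)) 2 in
  let hi := Z.div (Z.of_nat L - 1) 2 in
  map (fun i => (lo + Z.of_nat i)%Z) (seq 0 (Z.to_nat (hi - lo + 1))).

Definition Xi_box (L s : nat) : list Z :=
  filter (fun k => Z.leb (Z.abs k) (Z.of_nat s)) (ZL L).

(* V(Xi, a) = 1_{0 ∈ Xi} + 2 * sum_{k ∈ Xi \ {0}} cos^2(2 pi a k / L)
   (Xi is a duplicate-free list, so the sum is over the set) *)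
Definition cosV (L : nat) (Xi : list Z) (a : Z) : R :=
  (if existsb (Z.eqb 0) Xi then 1 else 0) +
  2 * fold_right Rplus 0
        (map (fun k => (cos (2 * PI * IZR a * IZR k / INR L)) ^ 2)
             (filter (fun k => negb (Z.eqb k 0)) Xi)).

Definition eventually_L (P : nat -> Prop) : Prop :=
  exists N : nat, forall L : nat, (N <= L)%nat -> P L.

(* A deterministic family (Xi_L)_L is typically s-sparse: for some fixed
   alpha, beta > 0, alpha s <= |Xi_L| <= beta s with probability 1 - o_L(1);
   for a deterministic set this means: for all L large enough. *)
Definition det_typically_sparse (Xi : nat -> list Z) (s : nat -> nat) : Prop :=
  exists alpha beta : R, 0 < alpha /\ 0 < beta /\
    eventually_L (fun L =>
      alpha * INR (s L) <= INR (length (Xi L)) <= beta * INR (s L)).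

(* Gamma-cosine generic: with probability 1 - o_L(1),
   min_{a in Z_L} V(Xi_L, a) >= Gamma (1 - o_L(1)); deterministic version. *)
Definition det_cosine_generic (Xi : nat -> list Z) (Gamma : nat -> R) : Prop :=
  exists eps : nat -> R, Un_cv eps 0 /\
    eventually_L (fun L =>
      forall a : Z, In a (ZL L) -> Gamma L * (1 - eps L) <= cosV L (Xi L) a).

(* Main.v *)
Require Import Defs.
From Stdlib Require Import Reals ZArith List Lia Lra.
Import ListNotations.
Open Scope R_scope.
Fixpoint Sm (f : nat -> R) (n : nat) : R :=
  match n with O => 0 | S n' => Sm f n' + f (S n') end.

Lemma fold_Rplus_c : forall l c, fold_right Rplus c l = c + fold_right Rplus 0 l.
Proof. induction l; intros; simpl; [ring| rewrite IHl; ring]. Qed.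

Lemma sum_seq_S : forall h m k,
  fold_right Rplus 0 (map h (seq (S m) k)) = Sm (fun j => h (m + j)%nat) k.
Proof.
  induction k. simpl; auto.
  rewrite seq_S, map_app, fold_right_app. simpl.
  rewrite fold_Rplus_c, IHk. replace (S (m + k))%nat with (m + S k)%nat by lia. ring.
Qed.

Lemma sum_nonneg : forall (h : nat -> R) l, (forall x, 0 <= h x) -> 0 <= fold_right Rplus 0 (map h l).
Proof. intros h l H; induction l; simpl; [lra| specialize (H a); lra]. Qed.

Lemma sum_sub : forall (h : nat -> R) m k N, (forall x, 0 <= h x) -> (m + k <= N)%nat ->
  fold_right Rplus 0 (map h (seq m k)) <= fold_right Rplus 0 (map h (seq 0 N)).
Proof.
  intros h m k N H Hle.
  replace N with (m + k + (N - m - k))%nat by lia.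
  rewrite seq_app, seq_app, !map_app, !fold_right_app.
  rewrite (fold_Rplus_c (map h (seq 0 m))), (fold_Rplus_c (map h (seq (0+m) k))).
  simpl.
  pose proof (sum_nonneg h (seq 0 m) H).
  pose proof (sum_nonneg h (seq (m+k) (N-m-k)) H).
  rewrite (fold_Rplus_c (map h (seq m k)) (fold_right Rplus 0 (map h (seq (m + k) (N - m - k))))). lra.
Qed.

Lemma sum_filter : forall (A : Type) (f : A -> R) p l,
  fold_right Rplus 0 (map f (filter p l)) =
  fold_right Rplus 0 (map (fun x => if p x then f x else 0) l).
Proof. induction l; simpl; auto. destruct (p a); simpl; rewrite IHl; ring. Qed.

Lemma len_filter_R : forall (A : Type) p (l : list A),
  INR (length (filter p l)) = fold_right Rplus 0 (map (fun x => if p x then 1 else 0) l).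
Proof.
  induction l; simpl; auto. destruct (p a); simpl length; [rewrite S_INR, IHl; simpl; ring| rewrite IHl; simpl; ring].
Qed.

Lemma len_filter_map : forall (A B : Type) (g : A -> B) p l,
  length (filter p (map g l)) = length (filter (fun x => p (g x)) l).
Proof. induction l; simpl; auto. destruct (p (g a)); simpl; auto. Qed.

Lemma len_filter_seq : forall P c w N m,
  (forall i, P i = true -> (c <= i <= c + w)%nat) ->
  (length (filter P (seq m N)) <= Nat.min (m + N) (c + w + 1) - Nat.max m c)%nat.
Proof.
  intros P c w N. induction N; intros m H. simpl; lia.
  simpl. destruct (P m) eqn:E.
  - apply H in E. simpl. specialize (IHN (S m) H). lia.
  - specialize (IHN (S m) H). lia.
Qed.

Lemma Sm_ext : forall f g n, (forall j, (1 <= j <= n)%nat -> f j = g j) -> Sm f n = Sm g n.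
Proof.
  induction n; intros H; simpl; auto. rewrite IHn, H; auto; try lia.
  intros; apply H; lia.
Qed.

Lemma Sm_mono : forall f a b, (forall j, 0 <= f j) -> (a <= b)%nat -> Sm f a <= Sm f b.
Proof.
  intros f a b H Hab. induction Hab. lra. simpl. specialize (H (S m)). lra.
Qed.

Lemma Sm_const1 : forall n, Sm (fun _ => 1) n = INR n.
Proof. induction n; simpl Sm; [simpl; ring| rewrite IHn, S_INR; ring]. Qed.

Definition Fx (x : R) (j : nat) : R := cos (x * INR j) ^ 2.

Lemma F_nonneg (x : R) j : 0 <= (Fx x) j.
Proof. intros; unfold Fx; nra. Qed.

Lemma F_pair (x : R) k : 7/16 <= (Fx x) k + (Fx x) (2 * k)%nat.
Proof.
  intros; unfold Fx. rewrite mult_INR.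
  replace (x * (INR 2 * INR k)) with (2 * (x * INR k)) by (simpl; ring).
  rewrite cos_2a_cos. set (c := cos (x * INR k)). pose proof (pow2_ge_0 (2*c*c - 3/4)). nra.
Qed.

Lemma pair_sum (x : R) n : 7/16 * INR n <= Sm (Fx x) n + Sm (fun k => (Fx x) (2*k)%nat) n.
Proof.
  induction n. simpl; lra. change (Sm (Fx x) (S n)) with (Sm (Fx x) n + (Fx x) (S n)).
  change (Sm (fun k => (Fx x) (2*k)%nat) (S n)) with (Sm (fun k => (Fx x) (2*k)%nat) n + (Fx x) (2 * S n)%nat).
  rewrite S_INR. pose proof (F_pair x (S n)). lra.
Qed.

Lemma B_le (x : R) n : Sm (fun k => (Fx x) (2*k)%nat) n <= Sm (Fx x) (2*n).
Proof.
  induction n. simpl; lra.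
  change (Sm (fun k => (Fx x) (2*k)%nat) (S n)) with (Sm (fun k => (Fx x) (2*k)%nat) n + (Fx x) (2 * S n)%nat).
  replace (2 * S n)%nat with (S (S (2 * n))) by lia.
  change (Sm (Fx x) (S (S (2 * n)))) with (Sm (Fx x) (2*n) + (Fx x) (S (2*n)) + (Fx x) (S (S (2*n)))).
  pose proof (F_nonneg x (S (2*n))). lra.
Qed.

Lemma key (x : R) n : 7/32 * INR n <= Sm (Fx x) (2*n).
Proof.
  pose proof (pair_sum x n). pose proof (B_le x n).
  pose proof (Sm_mono (Fx x) n (2*n) (F_nonneg x) ltac:(lia)). lra.
Qed.

Lemma V_bound (L s : nat) (a : Z) : (10 <= s)%nat -> (s <= L)%nat ->
  INR s / 16 <= cosV L (Xi_box L s) a.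
Proof.
  intros Hs HL.
  unfold cosV, Xi_box, ZL. cbv zeta.
  set (lo := (- (Z.of_nat L - 1) / 2)%Z).
  set (hi := ((Z.of_nat L - 1) / 2)%Z).
  rewrite sum_filter, sum_filter, map_map.
  match goal with |- context [fold_right Rplus 0 (map ?h (seq 0 ?N))] => set (hf := h); set (NN := N) end.
  assert (Hh : forall i, 0 <= hf i).
  { intros i; unfold hf. destruct (_ <=? _)%Z; [destruct negb|]; try lra. apply pow2_ge_0. }
  set (ln := Z.to_nat (- lo)). set (hn := Z.to_nat hi). set (t := Nat.min s hn).
  assert (Hlo : (0 <= - lo /\ hi <= - lo /\ 0 <= hi /\ 2 * hi + 2 >= Z.of_nat L)%Z) by (unfold lo, hi; Z.div_mod_to_equations; lia).
  assert (Hsub := sum_sub hf (S ln) t NN Hh ltac:(unfold NN, t, hn, ln; lia)).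
  rewrite sum_seq_S in Hsub.
  set (x := 2 * PI * IZR a / INR L).
  assert (Hext : Sm (fun j => hf (ln + j)%nat) t = Sm (Fx x) t).
  { apply Sm_ext. intros j Hj. unfold hf.
    assert (E : (lo + Z.of_nat (ln + j) = Z.of_nat j)%Z) by (unfold ln; lia).
    rewrite E. replace ((Z.abs (Z.of_nat j) <=? Z.of_nat s)%Z) with true by (symmetry; apply Z.leb_le; unfold t in Hj; lia).
    replace (negb (Z.of_nat j =? 0)%Z) with true by (symmetry; apply Bool.negb_true_iff, Z.eqb_neq; lia).
    unfold x, Fx. rewrite <- !INR_IZR_INZ. f_equal. f_equal. unfold Rdiv; ring. }
  rewrite Hext in Hsub.
  assert (Ht2: (t = 2*(t/2) + t mod 2 /\ t mod 2 < 2)%nat) by (split; [apply Nat.div_mod; lia | apply Nat.mod_upper_bound; lia]).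
  assert (Htv : (t = Nat.min s hn /\ Z.of_nat hn = hi)%nat) by lia.
  clearbody t.
  pose proof (Sm_mono (Fx x) (2 * (t / 2)) t ltac:(intros; apply pow2_ge_0) ltac:(lia)).
  pose proof (key x (t / 2)).
  assert (Hn : (s <= 7 * (t / 2))%nat) by lia.
  apply le_INR in Hn. rewrite mult_INR in Hn. simpl (INR 7) in Hn.
  assert (0 <= if existsb (Zeq_bool 0) (filter (fun k : Z => (Z.abs k <=? Z.of_nat s)%Z)
         (map (fun i : nat => (lo + Z.of_nat i)%Z) (seq 0 NN))) then 1 else 0) by (destruct existsb; lra).
  lra.
Qed.

Lemma len_bound (L s : nat) : (10 <= s)%nat -> (s <= L)%nat ->
  1/4 * INR s <= INR (length (Xi_box L s)) <= 3 * INR s.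
Proof.
  intros Hs HL. unfold Xi_box, ZL. cbv zeta.
  set (lo := (- (Z.of_nat L - 1) / 2)%Z).
  set (hi := ((Z.of_nat L - 1) / 2)%Z).
  set (NN := Z.to_nat (hi - lo + 1)).
  assert (Hlo : (0 <= - lo /\ hi <= - lo /\ 0 <= hi /\ 2 * hi + 2 >= Z.of_nat L)%Z) by (unfold lo, hi; Z.div_mod_to_equations; lia).
  split.
  - rewrite len_filter_R, map_map.
    set (hf := fun x : nat => if (Z.abs (lo + Z.of_nat x) <=? Z.of_nat s)%Z then 1 else 0).
    assert (Hh : forall i, 0 <= hf i) by (intros i; unfold hf; destruct (_ <=? _)%Z; lra).
    set (ln := Z.to_nat (- lo)). set (hn := Z.to_nat hi). set (t := Nat.min s hn).
    assert (Hsub := sum_sub hf (S ln) t NN Hh ltac:(unfold NN, t, hn, ln; lia)).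
    rewrite sum_seq_S in Hsub.
    assert (Hext : Sm (fun j => hf (ln + j)%nat) t = Sm (fun _ => 1) t).
    { apply Sm_ext. intros j Hj. unfold hf.
      assert (E : (lo + Z.of_nat (ln + j) = Z.of_nat j)%Z) by (unfold ln; lia).
      rewrite E. replace ((Z.abs (Z.of_nat j) <=? Z.of_nat s)%Z) with true by (symmetry; apply Z.leb_le; unfold t in Hj; lia).
      reflexivity. }
    rewrite Hext, Sm_const1 in Hsub.
    assert (Hn : (s <= 4 * t)%nat) by (unfold t, hn; lia).
    apply le_INR in Hn. rewrite mult_INR in Hn. simpl (INR 4) in Hn. lra.
  - rewrite len_filter_map.
    assert (H := len_filter_seq (fun x => (Z.abs (lo + Z.of_nat x) <=? Z.of_nat s)%Z)
                   (Z.to_nat (- lo - Z.of_nat s)) (2 * s) NN 0).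
    assert (Hl : (length (filter (fun x => (Z.abs (lo + Z.of_nat x) <=? Z.of_nat s)%Z) (seq 0 NN)) <= 3 * s)%nat).
    { eapply Nat.le_trans. apply H. intros i Hi. apply Z.leb_le in Hi. lia. lia. }
    apply le_INR in Hl. rewrite mult_INR in Hl. simpl (INR 3) in Hl. lra.
Qed.

Theorem lemma5p9 :
  exists s0 : nat, forall s : nat -> nat,
    eventually_L (fun L => (s0 <= s L /\ s L <= L)%nat) ->
    det_typically_sparse (fun L => Xi_box L (s L)) s /\
    det_cosine_generic (fun L => Xi_box L (s L)) (fun L => INR (s L) / 16).
Proof.
  exists 10%nat. intros s [N HN]. split.
  - exists (1/4), 3. split; [lra|]. split; [lra|]. exists N. intros L HL.
    destruct (HN L HL). apply len_bound; auto.
  - exists (fun _ => 0). split.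
    + intros e He. exists O. intros. unfold Rdist. rewrite Rminus_0_r, Rabs_R0. auto.
    + exists N. intros L HL a _. destruct (HN L HL). rewrite Rminus_0_r, Rmult_1_r.
      apply V_bound; auto.
Qed.
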